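(* For every $i\ge0$, the number $M_i$ of pairwise non-isomorphic diverging rooted trees of depth at most $i$ equals $T(i)$.
   Context: The tower function is $T(0)=1$, $T(i)=2^{T(i-1)}$. A rooted tree $T_v$ is a finite tree with a distinguished root $v$; isomorphisms of rooted trees must map root to root; its depth is the maximum distance from the root to a vertex. For a vertex $u$, the descendants of $u$ are the vertices whose path to the root passes through $u$ (including $u$); for a child $w$ of $u$ (a neighbor of $u$ farther from the root), the $u$-branch is the subtree spanned by the descendants of $w$, rooted at $w$. A rooted tree is diverging if for every vertex $u$ all its $u$-branches are pairwise non-isomorphic as rooted trees. *)

(* Defs.v *)
From Stdlib Require Import List Permutation.
From mathcomp Require Import all_boot.

Set Implicit Arguments.
Unset Strict Implicit.
Unset Printing Implicit Defensive.

Fixpoint tower (i : nat) : nat :=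
  if i is i'.+1 then 2 ^ tower i' else 1.

(* A finite rooted tree, given by the (finite) list of the branches
   hanging below its root.  The order of the list is irrelevant up to
   isomorphism (see [riso]). *)
Inductive rtree : Type := Node of seq rtree.

Definition children (t : rtree) : seq rtree := let: Node s := t in s.

Inductive riso : rtree -> rtree -> Prop :=
  | riso_node (s t t' : seq rtree) :
      Permutation t t' -> Forall2 riso s t' -> riso (Node s) (Node t).

Fixpoint depth (t : rtree) : nat :=
  let: Node s := t in foldr (fun c m => maxn (depth c).+1 m) 0 s.

Inductive diverging : rtree -> Prop :=
  | diverging_node (s : seq rtree) :
      (forall i j, i < j < size s ->
         ~ riso (nth (Node [::]) s i) (nth (Node [::]) s j)) ->
      Forall diverging s -> diverging (Node s).

(* Main.v *)
Require Import Defs.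
From Stdlib Require Import List Permutation.
From mathcomp Require Import all_boot.

Set Implicit Arguments.
Unset Strict Implicit.
Unset Printing Implicit Defensive.

Notation d0 := (Node [::]).

Lemma In_map_inv (A B : Type) (f : A -> B) (s : seq A) y :
  List.In y (map f s) -> exists2 x, List.In x s & y = f x.
Proof.
elim: s => //= x s IH [<-|/IH [z Hz ->]]; first by exists x; [left|].
by exists z; [right|].
Qed.

Lemma In_map_seq (A B : Type) (f : A -> B) s x :
  List.In x s -> List.In (f x) (map f s).
Proof. elim: s => //= y s IH [->|/IH]; [by left|by right]. Qed.

Lemma In_mem (T : eqType) (x : T) s : List.In x s <-> x \in s.
Proof.
elim: s => //= y s IH; rewrite in_cons; split.
  by case=> [->|/IH ->]; rewrite ?eqxx ?orbT.
by case/orP=> [/eqP->|/IH]; [left|right].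
Qed.

Lemma In_nth (A : Type) (x0 : A) s j : j < size s -> List.In (nth x0 s j) s.
Proof. elim: s j => //= y s IH [|j] /=; [by left | by move/IH; right]. Qed.

Lemma In_nth_ex (A : Type) (x0 : A) s x :
  List.In x s -> exists2 j, j < size s & x = nth x0 s j.
Proof.
elim: s => //= y s IH [->|/IH [j Hj ->]]; first by exists 0.
by exists j.+1.
Qed.

Lemma Forall2_In_l (A B : Type) (R : A -> B -> Prop) s t x :
  Forall2 R s t -> List.In x s -> exists2 y, List.In y t & R x y.
Proof.
elim=> //= a b s' t' Hab _ IH [<-|/IH [y Hy Hr]]; first by exists b; [left|].
by exists y; [right|].
Qed.

Lemma Forall2_In_r (A B : Type) (R : A -> B -> Prop) s t y :
  Forall2 R s t -> List.In y t -> exists2 x, List.In x s & R x y.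
Proof.
elim=> //= a b s' t' Hab _ IH [<-|/IH [x Hx Hr]]; first by exists a; [left|].
by exists x; [right|].
Qed.

Lemma Forall2_size (A B : Type) (R : A -> B -> Prop) s t :
  Forall2 R s t -> size s = size t.
Proof. by elim=> //= a b s' t' _ _ ->. Qed.

Lemma Forall2_nth (A B : Type) (R : A -> B -> Prop) a0 b0 s t j :
  Forall2 R s t -> j < size s -> R (nth a0 s j) (nth b0 t j).
Proof.
move=> F; elim: F j => //= a b s' t' Hab _ IH [|j] //= Hj.
exact: IH.
Qed.

Lemma Forall2_flip_in (A B : Type) (R : A -> B -> Prop) (R' : B -> A -> Prop) s t :
  (forall x y, List.In x s -> R x y -> R' y x) -> Forall2 R s t -> Forall2 R' t s.
Proof.
move=> H F; elim: F H => [|x y s' t' Hxy _ IH] H; constructor.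
  by apply: (H x y _ Hxy); left.
by apply: IH => a b Ha; apply: H; right.
Qed.

Lemma Forall2_trans_in (A B C : Type) (R1 : A -> B -> Prop) (R2 : B -> C -> Prop)
   (R3 : A -> C -> Prop) s t u :
  (forall x y z, List.In x s -> R1 x y -> R2 y z -> R3 x z) ->
  Forall2 R1 s t -> Forall2 R2 t u -> Forall2 R3 s u.
Proof.
move=> H F; elim: F H u => [|x y s' t' Hxy _ IH] H u F2.
  by inversion F2; constructor.
inversion F2; subst; constructor.
  by apply: (H x y _ _ Hxy) => //; left.
by apply: IH => // a b c Ha; apply: H; right.
Qed.

Lemma Forall2_map_r (A B C : Type) (R : A -> C -> Prop) (f : B -> C) s t :
  Forall2 (fun a b => R a (f b)) s t -> Forall2 R s (map f t).
Proof. by elim=> //= a b s' t' H _ IH; constructor. Qed.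

Lemma perm_map_seq (A B : Type) (f : A -> B) l l' :
  Permutation l l' -> Permutation (map f l) (map f l').
Proof.
move=> HP; elim: HP => /= [|x l1 l2 _ IH|x y l0|l1 l2 l3 _ H1 _ H2].
- by constructor.
- exact: perm_skip.
- exact: perm_swap.
- exact: Permutation_trans H1 H2.
Qed.

Lemma Permutation_rem (T : eqType) (x : T) s :
  x \in s -> Permutation s (x :: rem x s).
Proof.
elim: s => //= y s IH; rewrite in_cons; case: eqVneq => [->|Hne] /= Hx.
  by apply: Permutation_refl.
apply: Permutation_trans (perm_skip y (IH Hx)) _; exact: Permutation.perm_swap.
Qed.

Lemma perm_eq_Permutation (T : eqType) (s1 s2 : seq T) :
  perm_eq s1 s2 -> Permutation s1 s2.
Proof.
elim: s1 s2 => [|x s1 IH] s2 Hp.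
  by move/perm_size: Hp => /esym/size0nil ->; constructor.
have Hx : x \in s2 by rewrite -(perm_mem Hp) mem_head.
have H2 := Permutation_rem Hx.
apply: Permutation_trans _ (Permutation_sym H2); apply: perm_skip; apply: IH.
by rewrite -(perm_cons x); apply: perm_trans Hp _; apply/perm_to_rem.
Qed.

Lemma depth_child s c : List.In c s -> depth c < depth (Node s).
Proof.
elim: s => //= y s IH [->|/IH H]; rewrite leq_max; first by rewrite leqnn.
by apply/orP; right.
Qed.

Lemma depth_le s k :
  depth (Node s) <= k.+1 <-> (forall c, List.In c s -> depth c <= k).
Proof.
elim: s => [|y s IH] /=; first by split.
rewrite geq_max; split.
  case/andP=> H1 H2 c [<-|Hc] //; exact: (proj1 IH H2).
move=> H; apply/andP; split; first exact: (H y (or_introl erefl)).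
by apply/(proj2 IH) => c Hc; apply: H; right.
Qed.

Lemma depth0 s : depth (Node s) <= 0 -> s = [::].
Proof. by case: s => //= y s; rewrite geq_max. Qed.

Lemma riso_inv s t : riso (Node s) (Node t) ->
  exists t', Permutation t t' /\ Forall2 riso s t'.
Proof. by move=> H; inversion H; subst; eauto. Qed.

Lemma riso_sym_n n : forall x y, depth x < n -> riso x y -> riso y x.
Proof.
elim: n => [//|n IH] x y Hd H; case: H Hd => s t t' Hp HF Hd.
rewrite ltnS in Hd.
have HF' : Forall2 riso t' s.
  apply: (Forall2_flip_in _ HF) => a b Ha Hab; apply: IH Hab.
  exact: leq_trans (depth_child Ha) Hd.
have [s' [Hps HF2]] := Permutation_Forall2 (Permutation_sym Hp) HF'.
exact: riso_node Hps HF2.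
Qed.

Lemma riso_sym x y : riso x y -> riso y x.
Proof. exact: (@riso_sym_n (depth x).+1). Qed.

Lemma riso_trans_n n : forall x y z, depth x < n -> riso x y -> riso y z -> riso x z.
Proof.
elim: n => [//|n IH] x y z Hd H; case: H Hd => s t t1 Hp1 HF1 Hd H2.
rewrite ltnS in Hd.
case: z H2 => u H2.
have [u1 [Hp2 HF2]] := riso_inv H2.
have [u2 [Hpu HF3]] := Permutation_Forall2 Hp1 HF2.
apply: (riso_node (Permutation_trans Hp2 Hpu)).
apply: (Forall2_trans_in _ HF1 HF3) => a b c Ha; apply: IH.
exact: leq_trans (depth_child Ha) Hd.
Qed.

Lemma riso_trans x y z : riso x y -> riso y z -> riso x z.
Proof. exact: (@riso_trans_n (depth x).+1). Qed.

Definition pw (L : seq rtree) := forall a b, a < b < size L ->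
  ~ riso (nth d0 L a) (nth d0 L b).

Lemma pw_neq L p q : pw L -> p < size L -> q < size L -> p != q ->
  ~ riso (nth d0 L p) (nth d0 L q).
Proof.
move=> H Hp Hq Hne Hr; case: (ltngtP p q) => Hpq.
- by apply: (H p q _ Hr); rewrite Hpq Hq.
- by apply: (H q p _ (riso_sym Hr)); rewrite Hpq Hp.
- by rewrite Hpq eqxx in Hne.
Qed.

Fixpoint bits n : seq bitseq :=
  if n is n'.+1 then [seq false :: m | m <- bits n'] ++ [seq true :: m | m <- bits n']
  else [:: [::]].

Lemma size_bits n : size (bits n) = 2 ^ n.
Proof. by elim: n => //= n IH; rewrite size_cat !size_map IH expnS mul2n addnn. Qed.

Lemma uniq_bits n : uniq (bits n).
Proof.
elim: n => //= n IH; rewrite cat_uniq !map_inj_uniq // ?IH; try by move=> a b [].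
rewrite andbT; apply/hasPn => x /mapP [m' _ ->].
by apply/mapP; case=> m'' _.
Qed.

Lemma mem_bits m : m \in bits (size m).
Proof.
elim: m => //= b m IH; rewrite mem_cat; apply/orP.
by case: b; [right|left]; apply: map_f.
Qed.

Lemma size_in_bits n m : m \in bits n -> size m = n.
Proof.
elim: n m => [|n IH] m /=; first by rewrite inE => /eqP->.
by rewrite mem_cat => /orP [] /mapP [m' /IH <- ->].
Qed.

Definition idxs (L : seq rtree) (m : bitseq) := filter (nth false m) (iota 0 (size L)).
Definition sub L m := map (nth d0 L) (idxs L m).

Lemma mem_idxs L m q : (q \in idxs L m) = nth false m q && (q < size L).
Proof. by rewrite mem_filter mem_iota. Qed.

Lemma In_sub_inv L m c : List.In c (sub L m) ->
  exists q, [/\ q < size L, nth false m q & c = nth d0 L q].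
Proof.
move=> Hc; have [q /In_mem Hq ->] := In_map_inv Hc; move: Hq; rewrite mem_idxs => /andP [H1 H2].
by exists q.
Qed.

Lemma In_sub L m p : p < size L -> nth false m p -> List.In (nth d0 L p) (sub L m).
Proof. by move=> Hp Hm; apply: In_map_seq; apply/In_mem; rewrite mem_idxs Hm Hp. Qed.

Lemma sub_pw L m : pw L -> pw (sub L m).
Proof.
move=> H j k /andP [Hjk Hk].
have Hj : j < size (sub L m) by exact: ltn_trans Hjk Hk.
rewrite /sub size_map in Hj Hk; rewrite !(nth_map 0) //.
have Hs : sorted ltn (idxs L m).
  by apply: sorted_filter; [exact: ltn_trans | exact: iota_ltn_sorted].
have Hlt : nth 0 (idxs L m) j < nth 0 (idxs L m) k by apply: (sorted_ltn_nth ltn_trans 0 Hs).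
have Hin : forall r, r < size (idxs L m) -> nth 0 (idxs L m) r < size L.
  by move=> r Hr; have := mem_nth 0 Hr; rewrite mem_idxs => /andP [].
by apply: H; rewrite Hlt Hin.
Qed.

Lemma noniso_diff L ma mb p : pw L -> p < size L -> nth false ma p ->
  ~~ nth false mb p -> ~ riso (Node (sub L ma)) (Node (sub L mb)).
Proof.
move=> H Hp Ha Hb Hr; have [t' [Hpt HF]] := riso_inv Hr.
have [y Hy Hry] := Forall2_In_l HF (In_sub Hp Ha).
have [q [Hq Hmq Hyq]] := In_sub_inv (Permutation_in _ (Permutation_sym Hpt) Hy); subst y.
apply: (pw_neq H Hp Hq _ Hry).
by apply: contraNneq Hb => ->.
Qed.

Definition next (L : seq rtree) := map (fun m => Node (sub L m)) (bits (size L)).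

Fixpoint Ls i := if i is i'.+1 then next (Ls i') else [:: d0].

Definition good i L := [/\ size L = tower i,
        (forall t, List.In t L -> diverging t /\ depth t <= i),
        pw L &
        (forall t, diverging t -> depth t <= i ->
           exists2 u, List.In u L & riso t u)].

Lemma good0 : good 0 [:: d0].
Proof.
split=> //.
- move=> t [<-|//]; split=> //; constructor=> // a b /andP [_ //].
- move=> a b /andP [Hab Hb]; move: Hb; rewrite /= ltnS leqn0 => /eqP Hb; by rewrite Hb in Hab.
- move=> t _; case: t => s /depth0 ->; exists d0; first by left.
  by apply: (@riso_node [::] [::] [::]); constructor.
Qed.

Lemma build L (s : seq rtree) :
  (forall c, List.In c s -> exists2 q, q < size L & riso c (nth d0 L q)) ->
  exists idx : seq nat,
    Forall2 (fun c q => q < size L /\ riso c (nth d0 L q)) s idx.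
Proof.
elim: s => [|c s IH] H; first by exists [::].
have [q Hq Hr] := H c (or_introl erefl).
have [idx Hidx] := IH (fun c' Hc' => H c' (or_intror Hc')).
by exists (q :: idx); constructor.
Qed.

Lemma good_step i L : good i L -> good i.+1 (next L).
Proof.
case=> H1 H2 H3 H4; split.
- by rewrite size_map size_bits H1.
- move=> t Ht; have [m _ ->] := In_map_inv Ht; split.
    constructor; first exact: sub_pw.
    apply/Forall_forall => c Hc; have [q [Hq _ ->]] := In_sub_inv Hc.
    exact: (proj1 (H2 _ (In_nth d0 Hq))).
  apply/depth_le => c Hc; have [q [Hq _ ->]] := In_sub_inv Hc.
  exact: (proj2 (H2 _ (In_nth d0 Hq))).
- move=> a b /andP [Hab Hb].
  have Ha : a < size (next L) by exact: ltn_trans Hab Hb.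
  rewrite size_map in Ha Hb.
  rewrite !(nth_map [::]) //.
  set ma := nth [::] _ a; set mb := nth [::] _ b.
  have Hne : ma != mb by rewrite nth_uniq ?uniq_bits // neq_ltn Hab.
  have Hsa : size ma = size L by apply: size_in_bits; exact: mem_nth.
  have Hsb : size mb = size L by apply: size_in_bits; exact: mem_nth.
  case: (boolP (has (fun p => nth false ma p != nth false mb p) (iota 0 (size L)))) => [/hasP [p]|/hasPn Hall].
    rewrite mem_iota /= => Hp.
    case Ep : (nth false ma p); case Eq : (nth false mb p) => // _.
      by apply: (noniso_diff H3 Hp); rewrite ?Ep ?Eq.
    move=> Hr; apply: (noniso_diff (ma := mb) (mb := ma) H3 Hp) (riso_sym Hr).
      by rewrite Eq.
    by rewrite Ep.
  exfalso; move/negP: Hne; apply; apply/eqP.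
  apply: (eq_from_nth (x0 := false)); first by rewrite Hsa Hsb.
  move=> p Hp; apply/eqP; apply: contraNT (Hall p _) => //.
  by rewrite mem_iota /= -Hsa.
- move=> [s] Hdiv Hd.
  have [Hpw HF] : pw s /\ Forall diverging s by inversion Hdiv.
  have Hch : forall c, List.In c s -> exists2 q, q < size L & riso c (nth d0 L q).
    move=> c Hc.
    have [u Hu Hcu] := H4 c (proj1 (Forall_forall _ _) HF c Hc) (proj1 (depth_le s i) Hd c Hc).
    have [q Hq Huq] := In_nth_ex d0 Hu; subst u.
    by exists q.
  have [idx Hidx] := build Hch.
  have Hsz := Forall2_size Hidx.
  have Hlt : forall q, q \in idx -> q < size L.
    move=> q /In_mem Hq; have [c _ []] := Forall2_In_r Hidx Hq; done.
  have Huniq : uniq idx.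
    apply/(uniqP 0) => j k Hj Hk Hjk; case: (eqVneq j k) => // Hne; exfalso.
    rewrite inE -Hsz in Hj; rewrite inE -Hsz in Hk.
    have [_ Rj] := Forall2_nth d0 0 Hidx Hj.
    have [_ Rk] := Forall2_nth d0 0 Hidx Hk.
    rewrite Hjk in Rj.
    exact: (pw_neq Hpw Hj Hk Hne (riso_trans Rj (riso_sym Rk))).
  set m := [seq (p \in idx) | p <- iota 0 (size L)].
  exists (Node (sub L m)).
    apply: In_map_seq; apply/In_mem.
    have -> : size L = size m by rewrite size_map size_iota.
    exact: mem_bits.
  apply: (@riso_node s (sub L m) (map (nth d0 L) idx)).
    apply: perm_map_seq; apply: perm_eq_Permutation.
    apply: uniq_perm => //.
      by rewrite filter_uniq // iota_uniq.
    move=> q; rewrite mem_idxs.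
    case Hq : (q < size L); last first.
      by rewrite andbF; apply/esym/negP => /Hlt; rewrite Hq.
    by rewrite andbT (nth_map 0) ?size_iota // nth_iota.
  apply: Forall2_map_r.
  by apply: Forall2_impl Hidx => a b [].
Qed.

Lemma good_Ls i : good i (Ls i).
Proof. elim: i => [|i IH] /=; [exact: good0 | exact: good_step]. Qed.

Theorem lemma6p10 (i : nat) :
  exists L : seq rtree,
    [/\ size L = tower i,
        (forall t, List.In t L -> diverging t /\ depth t <= i),
        (forall a b, a < b < size L ->
           ~ riso (nth (Node [::]) L a) (nth (Node [::]) L b)) &
        (forall t, diverging t -> depth t <= i ->
           exists2 u, List.In u L & riso t u)].
Proof. exists (Ls i); exact: good_Ls. Qed.
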